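(* Let $[a,b]$ be an interval of length $\ell=b-a+1$ and $\bar y_{a\to b}:=\frac1\ell\sum_{j=a}^by_j$. Let $x_j$ be the predictions of FLH-OGD. Case 1: if the offline optimal takes the form of Structure 1 on $[a,b]$ and $\bar y_{a\to b}\ge B$, then $\sum_{j=a}^b(y_j-x_j)^2-(y_j-u_j)^2\le 10(B+G)^2\log n-\ell(B-u_a)^2$. Case 2: if the offline optimal takes the form of Structure 2 on $[a,b]$ and $\bar y_{a\to b}\le -B$, then $\sum_{j=a}^b(y_j-x_j)^2-(y_j-u_j)^2\le 10(B+G)^2\log n-\ell(B+u_a)^2$.
   Context: Squared loss game: $n\ge 3$, $B\ge 1$, $G\ge B$; for $t=1,\dots,n$ the learner predicts $x_t\in[-B,B]$, then the adversary reveals $y_t\in[-G,G]$. $[a,b]=\{a,\dots,b\}$. FLH-OGD: For each $j\in[n]$ a base learner $E^j$ is started at time $j$; it runs projected online gradient descent on $[-B,B]$ on the losses $x\mapsto (y_t-x)^2$, $t\ge j$: its first prediction $x^{(j)}_j$ is a fixed point of $[-B,B]$, and $x^{(j)}_{t+1}=\Pi\big(x^{(j)}_t-\tfrac{1}{2\tau}\cdot 2(x^{(j)}_t-y_t)\big)$ with $\tau=t-j+1$, $\Pi$ the projection onto $[-B,B]$. The FLH meta-algorithm with learning rate $\zeta$ keeps a probability vector $v_t=(v_t^{(1)},\dots,v_t^{(t)})$, $v_1=(1)$; it predicts $x_t=\sum_{j\le t}v_t^{(j)}x^{(j)}_t$; after $y_t$ is revealed it sets $\hat v^{(i)}_{t+1}=v_t^{(i)}e^{-\zeta(y_t-x_t^{(i)})^2}/\sum_{j\le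 t}v_t^{(j)}e^{-\zeta(y_t-x_t^{(j)})^2}$ for $i\le t$, then $v^{(t+1)}_{t+1}=1/(t+1)$ and $v^{(i)}_{t+1}=(1-\tfrac1{t+1})\hat v^{(i)}_{t+1}$. FLH-OGD uses $\zeta=1/(2(G+B)^2)$. Offline optimal: given $C_n>0$, $u_1,\dots,u_n$ is an optimal solution of: minimize $\frac12\sum_{t=1}^n(y_t-\tilde u_t)^2$ subject to $\sum_{t=2}^{n}|\tilde u_t-\tilde u_{t-1}|\le C_n$ and $-B\le\tilde u_t\le B$; with optimal dual variables $\lambda\ge0$ (TV constraint) and $\gamma^\pm_t\ge0$ (box constraints) satisfying the KKT conditions: there are $s_t\in[-1,1]$ with $s_t=\mathrm{sign}(u_{t+1}-u_t)$ whenever $u_{t+1}\ne u_t$, $s_0=s_n=0$, $u_t-y_t=\lambda(s_t-s_{t-1})+\gamma_t^--\gamma_t^+$, and $\lambda(\sum_{t=2}^n|u_t-u_{t-1}|-C_n)=0$, $\gamma_t^-(u_t+B)=0$, $\gamma_t^+(u_t-B)=0$. Structure 1 on $[a,b]\subseteq\{2,\dots,n-1\}$: $u_j=u_a\in(-B,B)$ for all $j\in[a,b]$, $u_b>u_{b+1}$ and $u_a>u_{a-1}$. Structure 2 on $[a,b]\subseteq\{2,\dots,n-1\}$: $u_j=u_a\in(-B,B)$ for all $j\in[a,b]$, $u_b<u_{b+1}$ and $u_a<u_{a-1}$. *)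

(* Defs.v *)
From Stdlib Require Import Reals Lra Lia List.
Open Scope R_scope.

(* sumR f a b = f a + f (a+1) + ... + f b  (0 if b < a) *)
Definition sumR (f : nat -> R) (a b : nat) : R :=
  fold_right Rplus 0 (map f (seq a (S b - a))).

Definition projB (B z : R) : R := Rmax (-B) (Rmin B z).

(* Base learner E^j: projected OGD started at time j with first prediction x0.
   ogd B y x0 j k = x^{(j)}_{j+k}; the step from time t=j+k' uses tau = t-j+1 = k'+1. *)
Fixpoint ogd (B : R) (y : nat -> R) (x0 : R) (j k : nat) : R :=
  match k with
  | O => x0
  | S k' =>
      let x := ogd B y x0 j k' in
      projB B (x - (1 / (2 * INR (S k'))) * (2 * (x - y (j + k')%nat)))
  end.

(* x^{(j)}_t, for t >= j; init j is the fixed first prediction of E^j *)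
Definition base (B : R) (y : nat -> R) (init : nat -> R) (j t : nat) : R :=
  ogd B y (init j) j (t - j).

Definition flh_update (B zeta : R) (y : nat -> R) (init : nat -> R)
    (t : nat) (w : nat -> R) : nat -> R :=
  let e := fun j => w j * exp (- zeta * (y t - base B y init j t) ^ 2) in
  let Z := sumR e 1 t in
  fun i =>
    if andb (Nat.leb 1 i) (Nat.leb i t) then (1 - 1 / INR (S t)) * (e i / Z)
    else if Nat.eqb i (S t) then 1 / INR (S t)
    else 0.

(* flh_weights ... t = v_t (t >= 1), as a function of the index i in [1,t]. *)
Fixpoint flh_weights (B zeta : R) (y : nat -> R) (init : nat -> R) (t : nat)
  : nat -> R :=
  match t with
  | O => fun _ => 0
  | S t' =>
      match t' with
      | O => fun i => if Nat.eqb i 1 then 1 else 0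
      | S _ => flh_update B zeta y init t' (flh_weights B zeta y init t')
      end
  end.

Definition flh_zeta (B G : R) : R := 1 / (2 * (G + B) ^ 2).

Definition flh_ogd_pred (B G : R) (y : nat -> R) (init : nat -> R) (t : nat) : R :=
  sumR (fun j => flh_weights B (flh_zeta B G) y init t j * base B y init j t) 1 t.

Definition sgnR (x : R) : R :=
  if Rlt_dec 0 x then 1 else if Rlt_dec x 0 then -1 else 0.

Definition TV (u : nat -> R) (n : nat) : R :=
  sumR (fun t => Rabs (u t - u (t - 1)%nat)) 2 n.

Definition feasible (n : nat) (B Cn : R) (u : nat -> R) : Prop :=
  TV u n <= Cn /\ (forall t, (1 <= t <= n)%nat -> -B <= u t <= B).

Definition offline_obj (n : nat) (y u : nat -> R) : R :=
  / 2 * sumR (fun t => (y t - u t) ^ 2) 1 n.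

Definition offline_optimal (n : nat) (B Cn : R) (y u : nat -> R) : Prop :=
  feasible n B Cn u /\
  (forall v, feasible n B Cn v -> offline_obj n y u <= offline_obj n y v).

(* KKT conditions with dual variables lam (TV), gm = gamma^-, gp = gamma^+,
   and subgradient signs s_t, t = 0..n. *)
Definition KKT (n : nat) (B Cn : R) (y u : nat -> R)
    (lam : R) (gm gp s : nat -> R) : Prop :=
  0 <= lam /\
  (forall t, (1 <= t <= n)%nat -> 0 <= gm t /\ 0 <= gp t) /\
  (forall t, (t <= n)%nat -> -1 <= s t <= 1) /\
  (forall t, (1 <= t <= n - 1)%nat -> u (S t) <> u t ->
       s t = sgnR (u (S t) - u t)) /\
  s 0%nat = 0 /\ s n = 0 /\
  (forall t, (1 <= t <= n)%nat ->
       u t - y t = lam * (s t - s (t - 1)%nat) + gm t - gp t) /\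
  lam * (TV u n - Cn) = 0 /\
  (forall t, (1 <= t <= n)%nat -> gm t * (u t + B) = 0 /\ gp t * (u t - B) = 0).

Definition structure1 (n : nat) (B : R) (u : nat -> R) (a b : nat) : Prop :=
  (2 <= a)%nat /\ (a <= b)%nat /\ (b <= n - 1)%nat /\
  (forall j, (a <= j <= b)%nat -> u j = u a) /\
  -B < u a < B /\ u b > u (S b) /\ u a > u (a - 1)%nat.

Definition structure2 (n : nat) (B : R) (u : nat -> R) (a b : nat) : Prop :=
  (2 <= a)%nat /\ (a <= b)%nat /\ (b <= n - 1)%nat /\
  (forall j, (a <= j <= b)%nat -> u j = u a) /\
  -B < u a < B /\ u b < u (S b) /\ u a < u (a - 1)%nat.

(* Main.v *)
Require Import Defs.
From Stdlib Require Import Reals Lra Lia List.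
From Coquelicot Require Import Coquelicot.
Open Scope R_scope.


Lemma cont_of_der (f df : R -> R) (x : R) : is_derive f x (df x) -> continuity_pt f x.
Proof. intros H. apply continuity_pt_filterlim. apply (@ex_derive_continuous R_AbsRing R_NormedModule). exists (df x). exact H. Qed.

Lemma mvt (f df : R -> R) (a b : R) : (forall x, is_derive f x (df x)) ->
  exists c, Rmin a b <= c <= Rmax a b /\ f b - f a = df c * (b - a).
Proof.
  intros H. apply (MVT_gen f a b df).
  - intros x _. apply H.
  - intros x _. apply (cont_of_der f df). apply H.
Qed.

Lemma tangent (D p d : R) : 0 < D -> -D <= p <= D -> -D <= p - d <= D ->
  exp (2 * (/ (2 * (D*D))) * p * d - (/ (2 * (D*D))) * (d*d))
   <= 1 + 2 * (/ (2 * (D*D))) * p * d.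
Proof.
  intros HD Hp Hpd.
  set (al := / (2 * (D*D))).
  assert (Hal : 0 < al) by (unfold al; apply Rinv_0_lt_compat; nra).
  assert (HalD : al * (D*D) = /2) by (unfold al; field; lra).
  set (k := 2 * al * p).
  set (phi := fun x => 1 + k*x - exp (k*x - al*(x*x))).
  set (phi1 := fun x => k - (k - 2*al*x) * exp (k*x - al*(x*x))).
  set (phi2 := fun x => exp (k*x - al*(x*x)) * (2*al - (k - 2*al*x)*(k - 2*al*x))).
  assert (D1 : forall x, is_derive phi x (phi1 x)).
  { intros x. unfold phi, phi1. auto_derive; auto.
    replace (k * x + - (al * (x * x))) with (k*x - al*(x*x)) by ring. ring. }
  assert (D2 : forall x, is_derive phi1 x (phi2 x)).
  { intros x. unfold phi1, phi2. auto_derive; auto.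
    replace (k * x + - (al * (x * x))) with (k*x - al*(x*x)) by ring. ring. }
  assert (P2 : forall c, Rmin 0 d <= c <= Rmax 0 d -> 0 <= phi2 c).
  { intros c Hc. unfold phi2. apply Rmult_le_pos. apply Rlt_le, exp_pos.
    assert (Hq : -D <= p - c <= D).
    { unfold Rmin, Rmax in Hc. destruct (Rle_dec 0 d); lra. }
    assert (Hq2 : (p - c)*(p-c) <= D*D) by nra.
    replace (k - 2*al*c) with (2*al*(p - c)) by (unfold k; ring).
    assert (al * ((p-c)*(p-c)) <= al * (D*D)) by (apply Rmult_le_compat_l; lra).
    nra. }
  assert (H1 : phi1 0 = 0).
  { unfold phi1. replace (k*0 - al*(0*0)) with 0 by ring. rewrite exp_0. ring. }
  assert (H0 : phi 0 = 0).
  { unfold phi. replace (k*0 - al*(0*0)) with 0 by ring. rewrite exp_0. ring. }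
  destruct (mvt phi phi1 0 d D1) as [c [Hc Ec]].
  destruct (mvt phi1 phi2 0 c D2) as [c' [Hc' Ec']].
  assert (Hc'' : Rmin 0 d <= c' <= Rmax 0 d).
  { unfold Rmin, Rmax in *. destruct (Rle_dec 0 d); destruct (Rle_dec 0 c); lra. }
  specialize (P2 c' Hc'').
  rewrite H1 in Ec'. rewrite H0 in Ec.
  assert (0 <= phi d).
  { assert (phi1 c * (d - 0) >= 0).
    { unfold Rmin, Rmax in Hc. rewrite Rminus_0_r in Ec'. 
      assert (0 <= c * d) by (destruct (Rle_dec 0 d); nra).
      replace (phi1 c) with (phi2 c' * c) by lra.
      rewrite Rminus_0_r. assert (0 <= phi2 c' * (c * d)) by (apply Rmult_le_pos; lra). nra. }
    lra. }
  unfold phi in H. fold k. lra.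
Qed.

Definition L (f : nat -> R) (a k : nat) := fold_right Rplus 0 (map f (seq a k)).

Lemma sumR_L f a b : sumR f a b = L f a (S b - a).
Proof. reflexivity. Qed.

Lemma fold_add c l : fold_right Rplus c l = fold_right Rplus 0 l + c.
Proof. induction l; simpl; [ring| rewrite IHl; ring]. Qed.

Lemma L_0 f a : L f a 0 = 0.
Proof. reflexivity. Qed.

Lemma L_S f a k : L f a (S k) = L f a k + f (a + k)%nat.
Proof. unfold L. rewrite seq_S, map_app, fold_right_app. simpl.
  rewrite fold_add. ring. Qed.

Lemma L_ext f g a k : (forall i, (a <= i < a + k)%nat -> f i = g i) -> L f a k = L g a k.
Proof. induction k; intros H. reflexivity.
  rewrite !L_S, IHk by (intros; apply H; lia). rewrite (H (a+k)%nat) by lia. reflexivity. Qed.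

Lemma L_le f g a k : (forall i, (a <= i < a + k)%nat -> f i <= g i) -> L f a k <= L g a k.
Proof. induction k; intros H. rewrite !L_0; lra.
  rewrite !L_S. assert (L f a k <= L g a k) by (apply IHk; intros; apply H; lia).
  specialize (H (a+k)%nat ltac:(lia)). lra. Qed.

Lemma L_plus f g a k : L (fun i => f i + g i) a k = L f a k + L g a k.
Proof. induction k. rewrite !L_0; ring. rewrite !L_S, IHk; ring. Qed.

Lemma L_scal c f a k : L (fun i => c * f i) a k = c * L f a k.
Proof. induction k. rewrite !L_0; ring. rewrite !L_S, IHk; ring. Qed.

Lemma L_const c a k : L (fun _ => c) a k = INR k * c.
Proof. induction k. rewrite L_0; simpl; ring. rewrite L_S, IHk, S_INR; ring. Qed.

Lemma L_tele F a k : L (fun i => F (S i) - F i) a k = F (a + k)%nat - F a.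
Proof. induction k. rewrite L_0, Nat.add_0_r; ring.
  rewrite L_S, IHk. replace (a + S k)%nat with (S (a + k)) by lia. ring. Qed.

Lemma L_pos f a k : (0 < k)%nat -> (forall i, (a <= i < a + k)%nat -> 0 < f i) -> 0 < L f a k.
Proof. induction k; intros Hk H. lia. rewrite L_S.
  destruct k. rewrite L_0. specialize (H (a+0)%nat ltac:(lia)). lra.
  assert (0 < L f a (S k)) by (apply IHk; [lia| intros; apply H; lia]).
  specialize (H (a + S k)%nat ltac:(lia)). lra. Qed.

Lemma L_ge_term f a k i : (forall j, (a <= j < a + k)%nat -> 0 <= f j) -> (a <= i < a + k)%nat ->
  f i <= L f a k.
Proof. induction k; intros H Hi. lia. rewrite L_S.
  assert (0 <= L f a k).
  { clear IHk Hi. induction k. rewrite L_0; lra. rewrite L_S.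
    assert (0 <= L f a k) by (apply IHk; intros; apply H; lia). specialize (H (a+k)%nat ltac:(lia)). lra. }
  destruct (Nat.eq_dec i (a + k)) as [->|Hne].
  - lra.
  - assert (f i <= L f a k) by (apply IHk; [intros; apply H; lia| lia]).
    specialize (H (a+k)%nat ltac:(lia)). lra. Qed.

Lemma projB_bound B z : 0 <= B -> -B <= projB B z <= B.
Proof. intros. unfold projB, Rmax, Rmin. repeat destruct Rle_dec; lra. Qed.

Lemma proj_contract B z xs : 0 <= B -> -B <= xs <= B -> (projB B z - xs)^2 <= (z - xs)^2.
Proof. intros. unfold projB, Rmax, Rmin. repeat destruct Rle_dec; nra. Qed.

Lemma ogd_bound B y x0 j k : 0 <= B -> -B <= x0 <= B -> -B <= ogd B y x0 j k <= B.
Proof. intros. destruct k; simpl. lra. apply projB_bound; lra. Qed.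

Lemma ogd_regret B G y x0 xs a k : 0 < B -> -B <= x0 <= B -> -B <= xs <= B ->
  (forall i, (a <= i < a + k)%nat -> -G <= y i <= G) ->
  L (fun i => (y i - ogd B y x0 a (i - a))^2 - (y i - xs)^2) a k
   + INR k * (ogd B y x0 a k - xs)^2
  <= (B+G)^2 * L (fun i => / INR (S (i - a))) a k.
Proof.
  intros HB Hx0 Hxs Hy. induction k.
  - rewrite !L_0. simpl. lra.
  - rewrite !L_S. replace (a + k - a)%nat with k by lia.
    assert (IH := IHk ltac:(intros; apply Hy; lia)).
    specialize (Hy (a+k)%nat ltac:(lia)).
    set (X := ogd B y x0 a k).
    assert (HX : -B <= X <= B) by (apply ogd_bound; lra).
    set (yy := y (a+k)%nat) in *.
    change (ogd B y x0 a (S k)) with (projB B (X - (1 / (2 * INR (S k))) * (2 * (X - yy)))).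
    set (z := X - (1 / (2 * INR (S k))) * (2 * (X - yy))).
    assert (Hc := proj_contract B z xs ltac:(lra) Hxs).
    rewrite S_INR in *. set (kk := INR k) in *.
    assert (Hk : 0 <= kk) by apply pos_INR.
    assert (Eq : (yy - X)^2 - (yy - xs)^2 + (kk+1)*(z - xs)^2 - kk*(X-xs)^2 = (yy-X)^2 / (kk+1)).
    { unfold z. rewrite S_INR. fold kk. field. lra. }
    assert (Hb : (yy - X)^2 / (kk+1) <= (B+G)^2 * / (kk + 1)).
    { unfold Rdiv. apply Rmult_le_compat_r. left; apply Rinv_0_lt_compat; lra. nra. }
    assert ((kk+1)*(projB B z - xs)^2 <= (kk+1)*(z-xs)^2) by (apply Rmult_le_compat_l; lra).
    change (ogd B y x0 a k) with X in IH. rewrite Rmult_plus_distr_l. lra.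
Qed.

Lemma ln_le_minus1 q : 0 < q -> ln q <= q - 1.
Proof. intros. pose proof (exp_ineq1_le (ln q)). rewrite exp_ln in H0; lra. Qed.

Lemma harm_step j : / INR (S j) <= 2 * (ln (INR (S (S j))) - ln (INR (S j))).
Proof.
  rewrite !S_INR. set (x := INR j). assert (0 <= x) by apply pos_INR.
  assert (ln ((x+1)/(x+1+1)) <= (x+1)/(x+1+1) - 1) by (apply ln_le_minus1; apply Rdiv_lt_0_compat; lra).
  rewrite ln_div in H0 by lra.
  assert ((x+1)/(x+1+1) - 1 = - / (x+1+1)) by (field; lra).
  assert (/ (x+1) <= 2 * / (x+1+1)).
  { apply (Rmult_le_reg_l ((x+1)*(x+1+1))). nra. field_simplify; lra. }
  lra.
Qed.

Lemma harm a k : L (fun i => / INR (S (i - a))) a k <= 2 * ln (INR (S k)).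
Proof.
  apply Rle_trans with (L (fun i => (fun m => 2 * ln (INR (S (m - a)))) (S i) - (fun m => 2 * ln (INR (S (m - a)))) i) a k).
  - apply L_le. intros i Hi. cbv beta. replace (S i - a)%nat with (S (i - a)) by lia.
    pose proof (harm_step (i - a)). lra.
  - pose proof (L_tele (fun m => 2 * ln (INR (S (m - a)))) a k) as HT. cbv beta in HT |- *. rewrite HT. replace (a + k - a)%nat with k by lia. replace (a - a)%nat with 0%nat by lia.
    cbv beta. replace (INR 1) with 1 by reflexivity. rewrite ln_1. lra.
Qed.

Definition hv (B z : R) (y : nat -> R) (init : nat -> R) (t j : nat) : R :=
  exp (- z * (y t - base B y init j t) ^ 2).

Lemma W_succ B z y init t : (1 <= t)%nat ->
  flh_weights B z y init (S t) = flh_update B z y init t (flh_weights B z y init t).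
Proof. intros. destruct t. lia. reflexivity. Qed.

Lemma upd_in B z y init t w i : (1 <= i <= t)%nat ->
  flh_update B z y init t w i =
  (1 - 1 / INR (S t)) * (w i * hv B z y init t i / sumR (fun j => w j * hv B z y init t j) 1 t).
Proof. intros H. unfold flh_update, hv.
  replace (Nat.leb 1 i) with true by (symmetry; apply Nat.leb_le; lia).
  replace (Nat.leb i t) with true by (symmetry; apply Nat.leb_le; lia). reflexivity. Qed.

Lemma upd_new B z y init t w : flh_update B z y init t w (S t) = 1 / INR (S t).
Proof. unfold flh_update.
  replace (Nat.leb (S t) t) with false by (symmetry; apply Nat.leb_gt; lia).
  rewrite Nat.eqb_refl. destruct (Nat.leb 1 (S t)); reflexivity. Qed.

Lemma W_inv B z y init t : (1 <= t)%nat ->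
  (forall i, (1 <= i <= t)%nat -> 0 < flh_weights B z y init t i) /\
  sumR (flh_weights B z y init t) 1 t = 1.
Proof.
  induction t; intros Ht. lia.
  destruct t.
  - split.
    + intros i Hi. replace i with 1%nat by lia. simpl. lra.
    + rewrite sumR_L. replace (2 - 1)%nat with 1%nat by lia. rewrite L_S, L_0. simpl. lra.
  - destruct (IHt ltac:(lia)) as [Hpos Hsum].
    set (t' := S t) in *.
    set (w := flh_weights B z y init t') in *.
    assert (HZ : 0 < sumR (fun j => w j * hv B z y init t' j) 1 t').
    { rewrite sumR_L. apply L_pos. lia. intros i Hi. apply Rmult_lt_0_compat.
      apply Hpos; lia. apply exp_pos. }
    assert (Ht1 : 1 <= INR t') by (apply (le_INR 1); lia).
    rewrite W_succ by lia. fold w. split.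
    + intros i Hi. destruct (Nat.eq_dec i (S t')) as [->|Hne].
      * rewrite upd_new. rewrite S_INR. apply Rdiv_lt_0_compat; lra.
      * rewrite upd_in by lia. apply Rmult_lt_0_compat.
        rewrite S_INR. replace (1 - 1/(INR t' + 1)) with (INR t' / (INR t'+1)) by (field; lra). apply Rdiv_lt_0_compat; lra.
        apply Rdiv_lt_0_compat; [|exact HZ]. apply Rmult_lt_0_compat. apply Hpos; lia. apply exp_pos.
    + rewrite sumR_L. replace (S (S t') - 1)%nat with (S t') by lia. rewrite L_S.
      replace (1 + t')%nat with (S t') by lia. rewrite upd_new.
      rewrite (L_ext _ (fun i => ((1 - 1 / INR (S t')) / sumR (fun j => w j * hv B z y init t' j) 1 t') * (w i * hv B z y init t' i))).
      2:{ intros i Hi. rewrite upd_in by lia. field. repeat split; try lra. apply not_0_INR; lia. }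
      rewrite L_scal. rewrite sumR_L in HZ |- *. replace (S t' - 1)%nat with t' in * by lia.
      rewrite S_INR. field. split; lra.
Qed.

Lemma base_bound B y init j t : 0 < B -> -B <= init j <= B -> -B <= base B y init j t <= B.
Proof. intros. unfold base. apply ogd_bound; lra. Qed.

Lemma mix B G y init t : (1 <= t)%nat -> 1 <= B -> B <= G -> -G <= y t <= G ->
  (forall j, (1 <= j <= t)%nat -> -B <= init j <= B) ->
  sumR (fun j => flh_weights B (flh_zeta B G) y init t j * hv B (flh_zeta B G) y init t j) 1 t
  <= exp (- flh_zeta B G * (y t - flh_ogd_pred B G y init t) ^ 2).
Proof.
  intros Ht HB HG Hy Hi.
  set (z := flh_zeta B G).
  set (w := flh_weights B z y init t).
  destruct (W_inv B z y init t Ht) as [Hpos Hsum]. fold w in Hpos, Hsum.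
  set (m := flh_ogd_pred B G y init t).
  set (D := B + G).
  assert (HD : 0 < D) by (unfold D; lra).
  assert (Hz : z = / (2 * (D*D))) by (unfold z, flh_zeta, D; field; lra).
  assert (Hm : m = L (fun j => w j * base B y init j t) 1 t).
  { unfold m, flh_ogd_pred. rewrite sumR_L. replace (S t - 1)%nat with t by lia. reflexivity. }
  rewrite sumR_L in Hsum |- *. replace (S t - 1)%nat with t in * by lia.
  assert (Hmb : -B <= m <= B).
  { rewrite Hm. split.
    - apply Rle_trans with (L (fun j => -B * w j) 1 t). rewrite L_scal, Hsum. lra.
      apply L_le. intros j Hj. specialize (Hpos j ltac:(lia)).
      pose proof (base_bound B y init j t ltac:(lra) (Hi j ltac:(lia))). nra.
    - apply Rle_trans with (L (fun j => B * w j) 1 t).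
      apply L_le. intros j Hj. specialize (Hpos j ltac:(lia)).
      pose proof (base_bound B y init j t ltac:(lra) (Hi j ltac:(lia))). nra.
      rewrite L_scal, Hsum. lra. }
  set (p := y t - m).
  set (E := exp (- z * p ^ 2)).
  apply Rle_trans with (L (fun j => (E * (1 - 2*z*p*m)) * w j + (E * (2*z*p)) * (w j * base B y init j t)) 1 t).
  - apply L_le. intros j Hj.
    set (X := base B y init j t).
    assert (HX : -B <= X <= B) by (apply base_bound; [lra| apply Hi; lia]).
    assert (Ht' := tangent D p (X - m) HD ltac:(unfold p, D; lra) ltac:(unfold p, D; lra)).
    rewrite <- Hz in Ht'.
    assert (Hh : hv B z y init t j = E * exp (2 * z * p * (X - m) - z * ((X - m) * (X - m)))).
    { unfold hv, E. fold X. rewrite <- exp_plus. f_equal. unfold p. ring. }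
    rewrite Hh. specialize (Hpos j ltac:(lia)).
    assert (0 < E) by apply exp_pos.
    assert (E * exp (2 * z * p * (X - m) - z * ((X - m) * (X - m))) <= E * (1 + 2 * z * p * (X - m)))
      by (apply Rmult_le_compat_l; lra).
    assert (w j * (E * exp (2 * z * p * (X - m) - z * ((X - m) * (X - m)))) <= w j * (E * (1 + 2 * z * p * (X - m))))
      by (apply Rmult_le_compat_l; lra).
    fold X. nra.
  - rewrite L_plus, !L_scal, Hsum, <- Hm. unfold E, p. right. ring.
Qed.

Lemma flh_step B G y init t a : (1 <= a <= t)%nat -> 1 <= B -> B <= G -> -G <= y t <= G ->
  (forall j, (1 <= j <= t)%nat -> -B <= init j <= B) ->
  flh_zeta B G * ((y t - flh_ogd_pred B G y init t) ^ 2 - (y t - base B y init a t) ^ 2)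
  <= (ln (flh_weights B (flh_zeta B G) y init (S t) a) + ln (INR (S t)))
     - (ln (flh_weights B (flh_zeta B G) y init t a) + ln (INR t)).
Proof.
  intros Ha HB HG Hy Hi.
  assert (Hmix := mix B G y init t ltac:(lia) HB HG Hy Hi).
  set (z := flh_zeta B G) in *.
  destruct (W_inv B z y init t ltac:(lia)) as [Hpos Hsum].
  set (w := flh_weights B z y init t) in *.
  set (Z := sumR (fun j => w j * hv B z y init t j) 1 t) in *.
  assert (HZ : 0 < Z).
  { unfold Z. rewrite sumR_L. apply L_pos. lia. intros i Hi'. apply Rmult_lt_0_compat.
    apply Hpos; lia. apply exp_pos. }
  rewrite W_succ by lia. fold w. rewrite upd_in by lia. fold Z.
  assert (Ht1 : 1 <= INR t) by (apply (le_INR 1); lia).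
  rewrite S_INR.
  replace (1 - 1 / (INR t + 1)) with (INR t / (INR t + 1)) by (field; lra).
  specialize (Hpos a ltac:(lia)).
  assert (0 < hv B z y init t a) by apply exp_pos.
  rewrite ln_mult by (try apply Rdiv_lt_0_compat; try apply Rmult_lt_0_compat; lra).
  rewrite !ln_div by (try apply Rmult_lt_0_compat; lra).
  rewrite ln_mult by lra.
  unfold hv at 1. rewrite ln_exp.
  assert (ln Z <= - z * (y t - flh_ogd_pred B G y init t) ^ 2).
  { rewrite <- (ln_exp (- z * _)). apply ln_le; lra. }
  unfold base. lra.
Qed.

Lemma W_diag B z y init a : (1 <= a)%nat -> ln (flh_weights B z y init a a) + ln (INR a) = 0.
Proof.
  intros Ha. destruct a. lia. destruct a.
  - simpl. rewrite ln_1. ring.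
  - rewrite W_succ by lia. rewrite upd_new.
    assert (0 < INR (S (S a))) by (apply lt_0_INR; lia).
    unfold Rdiv. rewrite Rmult_1_l, ln_Rinv by lra. ring.
Qed.

Lemma flh_sum B G y init n a b : (1 <= a <= b)%nat -> (S b <= n)%nat -> 1 <= B -> B <= G ->
  (forall t, (1 <= t <= n)%nat -> -G <= y t <= G) ->
  (forall j, (1 <= j <= n)%nat -> -B <= init j <= B) ->
  L (fun t => (y t - flh_ogd_pred B G y init t) ^ 2 - (y t - base B y init a t) ^ 2) a (S b - a)
  <= 2 * (B+G)^2 * ln (INR (S b)).
Proof.
  intros Hab Hbn HB HG Hy Hi.
  set (z := flh_zeta B G).
  assert (Hz : 0 < z) by (unfold z, flh_zeta; apply Rdiv_lt_0_compat; nra).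
  set (F := fun t => ln (flh_weights B z y init t a) + ln (INR t)).
  assert (H1 : z * L (fun t => (y t - flh_ogd_pred B G y init t) ^ 2 - (y t - base B y init a t) ^ 2) a (S b - a)
      <= F (S b) - F a).
  { rewrite <- L_scal. replace (S b) with (a + (S b - a))%nat at 2 by lia. rewrite <- (L_tele F).
    apply L_le. intros t Ht. unfold F. apply flh_step; try lia; try lra.
    apply Hy; lia. intros; apply Hi; lia. }
  assert (HFa : F a = 0) by (unfold F; apply W_diag; lia).
  assert (HFb : F (S b) <= ln (INR (S b))).
  { unfold F. destruct (W_inv B z y init (S b) ltac:(lia)) as [Hpos Hsum].
    assert (flh_weights B z y init (S b) a <= 1).
    { rewrite <- Hsum. rewrite sumR_L. apply L_ge_term. intros; left; apply Hpos; lia. lia. }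
    assert (ln (flh_weights B z y init (S b) a) <= 0).
    { rewrite <- ln_1. apply ln_le. apply Hpos; lia. lra. }
    lra. }
  assert (Hzinv : 2 * (B+G)^2 = / z) by (unfold z, flh_zeta; field; nra).
  rewrite Hzinv.
  apply (Rmult_le_reg_l z). lra. rewrite <- Rmult_assoc, Rinv_r by lra. lra.
Qed.

Lemma interval_regret B G y init n a b xs : (1 <= a <= b)%nat -> (S b <= n)%nat -> 1 <= B -> B <= G ->
  (forall t, (1 <= t <= n)%nat -> -G <= y t <= G) ->
  (forall j, (1 <= j <= n)%nat -> -B <= init j <= B) -> -B <= xs <= B ->
  L (fun t => (y t - flh_ogd_pred B G y init t) ^ 2 - (y t - xs) ^ 2) a (S b - a)
  <= 2 * (B+G)^2 * ln (INR (S b)) + 2 * (B+G)^2 * ln (INR (S (S b - a))).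
Proof.
  intros Hab Hbn HB HG Hy Hi Hxs.
  rewrite (L_ext _ (fun t => ((y t - flh_ogd_pred B G y init t) ^ 2 - (y t - base B y init a t) ^ 2)
           + ((y t - ogd B y (init a) a (t - a)) ^ 2 - (y t - xs) ^ 2))).
  2:{ intros; unfold base; ring. }
  rewrite L_plus.
  assert (H1 := flh_sum B G y init n a b Hab Hbn HB HG Hy Hi).
  assert (H2 := ogd_regret B G y (init a) xs a (S b - a) ltac:(lra) (Hi a ltac:(lia)) Hxs
                  ltac:(intros; apply Hy; lia)).
  assert (H3 := harm a (S b - a)).
  assert (0 <= INR (S b - a) * (ogd B y (init a) a (S b - a) - xs) ^ 2)
    by (apply Rmult_le_pos; [apply pos_INR| apply pow2_ge_0]).
  assert ((B+G)^2 * L (fun i => / INR (S (i - a))) a (S b - a) <= (B+G)^2 * (2 * ln (INR (S (S b - a)))))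
    by (apply Rmult_le_compat_l; [apply pow2_ge_0| exact H3]).
  lra.
Qed.

Lemma comp_sum y u a k c xs : (forall i, (a <= i < a + k)%nat -> u i = c) ->
  L (fun t => (y t - xs) ^ 2 - (y t - u t) ^ 2) a k = INR k * (xs^2 - c^2) + 2 * (c - xs) * L y a k.
Proof.
  intros H. rewrite (L_ext _ (fun t => (xs^2 - c^2) + 2 * (c - xs) * y t)).
  2:{ intros i Hi. rewrite H by lia. ring. }
  rewrite L_plus, L_scal, L_const. ring.
Qed.

Theorem lemma6 (n : nat) (B G Cn : R) (y : nat -> R) (init : nat -> R)
    (u : nat -> R) (lam : R) (gm gp s : nat -> R) (a b : nat) :
  (3 <= n)%nat -> 1 <= B -> B <= G ->
  (forall t, (1 <= t <= n)%nat -> -G <= y t <= G) ->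
  (forall j, (1 <= j <= n)%nat -> -B <= init j <= B) ->
  0 < Cn ->
  offline_optimal n B Cn y u ->
  KKT n B Cn y u lam gm gp s ->
  let l := INR (S b - a) in
  let ybar := / l * sumR y a b in
  let regret := sumR (fun j => (y j - flh_ogd_pred B G y init j) ^ 2
                              - (y j - u j) ^ 2) a b in
  (structure1 n B u a b -> B <= ybar ->
     regret <= 10 * (B + G) ^ 2 * ln (INR n) - l * (B - u a) ^ 2) /\
  (structure2 n B u a b -> ybar <= - B ->
     regret <= 10 * (B + G) ^ 2 * ln (INR n) - l * (B + u a) ^ 2).
Proof.
  intros Hn HB HG Hy Hi _ _ _ l ybar regret.
  assert (key : forall xs, (2 <= a)%nat -> (a <= b)%nat -> (b <= n - 1)%nat ->
    (forall j, (a <= j <= b)%nat -> u j = u a) -> -B <= xs <= B ->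
    regret <= 4 * (B+G)^2 * ln (INR n) + (l * (xs^2 - u a ^2) + 2 * (u a - xs) * (l * ybar))).
  { intros xs Ha Hab Hbn Hu Hxs.
    assert (Hl : 0 < l) by (unfold l; apply lt_0_INR; lia).
    assert (Hyb : l * ybar = sumR y a b) by (unfold ybar; field; lra).
    rewrite Hyb. unfold regret. rewrite !sumR_L.
    rewrite (L_ext _ (fun t => ((y t - flh_ogd_pred B G y init t) ^ 2 - (y t - xs) ^ 2)
             + ((y t - xs) ^ 2 - (y t - u t) ^ 2))) by (intros; ring).
    rewrite L_plus. rewrite (comp_sum y u a (S b - a) (u a) xs) by (intros; apply Hu; lia).
    assert (H1 := interval_regret B G y init n a b xs ltac:(lia) ltac:(lia) HB HG Hy Hi Hxs).
    assert (Hn0 : 0 < INR n) by (apply lt_0_INR; lia).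
    assert (ln (INR (S b)) <= ln (INR n)) by (apply ln_le; [apply lt_0_INR; lia| apply le_INR; lia]).
    assert (ln (INR (S (S b - a))) <= ln (INR n)) by (apply ln_le; [apply lt_0_INR; lia| apply le_INR; lia]).
    assert (0 <= (B+G)^2) by apply pow2_ge_0.
    assert ((B+G)^2 * ln (INR (S b)) <= (B+G)^2 * ln (INR n)) by (apply Rmult_le_compat_l; lra).
    assert ((B+G)^2 * ln (INR (S (S b - a))) <= (B+G)^2 * ln (INR n)) by (apply Rmult_le_compat_l; lra).
    fold l. lra. }
  assert (Hlnn : 0 <= ln (INR n)).
  { rewrite <- ln_1. apply ln_le. lra. apply (le_INR 1); lia. }
  assert (0 <= (B+G)^2) by apply pow2_ge_0.
  assert (0 <= (B+G)^2 * ln (INR n)) by (apply Rmult_le_pos; lra).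
  split.
  - intros [Ha [Hab [Hbn [Hu [Hc _]]]]] Hybar.
    specialize (key B Ha Hab Hbn Hu ltac:(lra)).
    assert (Hl : 0 < l) by (unfold l; apply lt_0_INR; lia).
    assert (0 <= (B - u a) * (l * ybar - l * B)).
    { apply Rmult_le_pos. lra. nra. }
    nra.
  - intros [Ha [Hab [Hbn [Hu [Hc _]]]]] Hybar.
    specialize (key (-B) Ha Hab Hbn Hu ltac:(lra)).
    assert (Hl : 0 < l) by (unfold l; apply lt_0_INR; lia).
    assert (0 <= (B + u a) * (- B * l - l * ybar)).
    { apply Rmult_le_pos. lra. nra. }
    nra.
Qed.
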